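(* Let $(N_n)_{n\in\mathbb{N}}$ be a strictly increasing sequence of natural numbers and let $f_n:\ell_1\to\mathbb{R}$ be defined as below. Then $\big\|\sum_{i=1}^n f_i \big\|_{FBL[c_0]} \leq 1$ for every $n \in \mathbb{N}$.
   Context: Identify $c_0^*=\ell_1$ and write $x^*=(x^*_1,x^*_2,\ldots)$. For $n<m$ let $g_{nm}: \ell_1 \to [0,1]$ be any continuous function such that $g_{nm}(x^* ) = 0$ if $N_m|x_n^*| \leq |x_m^*|$, $g_{nm}(x^* ) = 1$ if $|x_m^*| \leq (N_m-1)|x_n^*|$, and $g_{nm}(x^* )=g_{nm}(x^*/\|x^*\|)$ whenever $x^* \neq 0$. Define $$f_n(x^* ) = \big(|x_n^*|-N_n\max\{|x_m^*| : m<n\}\big)^+ \cdot \prod_{m > n}g_{nm}(x^* ),$$ where $r^+=\max\{r,0\}$ and the max over the empty set is $0$. For $f:\ell_1\to\mathbb{R}$, $\|f\|_{FBL[c_0]} = \sup \{\sum_{i = 1}^k |f(x_{i}^{*})| : k \in \mathbb{N},\ x_1^{*}, \ldots, x_k^{*} \in \ell_1,\ \sup_{x \in B_{c_0}} \sum_{i=1}^k |x_i^{*}(x)| \leq 1 \}$, the norm of the free Banach lattice $FBL[c_0]$ (the closure in this norm of the vector sublattice of $\mathbb{R}^{\ell_1}$ generated by the evaluations $x^*\mapsto x^*(x)$, $x\in c_0$). *)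

(* Defs.v *)
From Stdlib Require Import Reals Lra List.
From Coquelicot Require Import Coquelicot.
Open Scope R_scope.

(* Sequences indexed 0,1,2,... (the paper's 1,2,3,... shifted by one). *)
Definition seqR := nat -> R.

(* membership in l1 (= c_0^* ) *)
Definition in_l1 (x : seqR) : Prop := ex_series (fun j => Rabs (x j)).
Definition l1norm (x : seqR) : R := Series (fun j => Rabs (x j)).

Definition in_c0 (x : seqR) : Prop := is_lim_seq x 0.
Definition in_Bc0 (x : seqR) : Prop := in_c0 x /\ forall j, Rabs (x j) <= 1.

Definition pair (xs x : seqR) : R := Series (fun j => xs j * x j).

Definition l1_continuous_at (g : seqR -> R) (x : seqR) : Prop :=
  forall eps, 0 < eps -> exists delta, 0 < delta /\
    forall y, in_l1 y -> l1norm (fun j => y j - x j) < delta ->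
      Rabs (g y - g x) < eps.

Definition admissible_g (N : nat -> nat) (g : nat -> nat -> seqR -> R) : Prop :=
  forall n m, (n < m)%nat ->
    (forall x, in_l1 x -> 0 <= g n m x <= 1) /\
    (forall x, in_l1 x -> (x n <> 0 \/ x m <> 0) -> l1_continuous_at (g n m) x) /\
    (forall x, in_l1 x -> INR (N m) * Rabs (x n) <= Rabs (x m) -> g n m x = 0) /\
    (forall x, in_l1 x -> x n <> 0 ->
        Rabs (x m) <= (INR (N m) - 1) * Rabs (x n) -> g n m x = 1) /\
    (forall x, in_l1 x -> (exists j, x j <> 0) ->
        g n m x = g n m (fun j => x j / l1norm x)).

(* max{|x_m| : m < n}, with max of the empty set = 0 *)
Definition maxbelow (x : seqR) (n : nat) : R :=
  fold_right Rmax 0 (map (fun m => Rabs (x m)) (seq 0 n)).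

(* infinite product prod_{m > n} g_{nm}(x) := limit of the partial products *)
Definition partial_prod (g : nat -> nat -> seqR -> R) (n : nat) (x : seqR)
  (M : nat) : R :=
  fold_right Rmult 1 (map (fun m => g n m x) (seq (S n) M)).
Definition inf_prod (g : nat -> nat -> seqR -> R) (n : nat) (x : seqR) : R :=
  real (Lim_seq (partial_prod g n x)).

Definition f (N : nat -> nat) (g : nat -> nat -> seqR -> R) (n : nat)
  (x : seqR) : R :=
  Rmax (Rabs (x n) - INR (N n) * maxbelow x n) 0 * inf_prod g n x.

(* sum_{i < n} f_i  (the paper's sum_{i=1}^n f_i) *)
Definition Fsum (N : nat -> nat) (g : nat -> nat -> seqR -> R) (n : nat)
  (x : seqR) : R :=
  fold_right Rplus 0 (map (fun i => f N g i x) (seq 0 n)).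

Definition fbl_admissible (xs : list seqR) : Prop :=
  List.Forall in_l1 xs /\
  forall x, in_Bc0 x ->
    fold_right Rplus 0 (map (fun y => Rabs (pair y x)) xs) <= 1.

Definition fbl_norm (F : seqR -> R) : Rbar :=
  Lub_Rbar (fun r => exists xs, fbl_admissible xs /\
     r = fold_right Rplus 0 (map (fun y => Rabs (F y)) xs)).

(* Main.v *)
Require Import Defs.
From Stdlib Require Import Reals.
From Coquelicot Require Import Coquelicot.
From Stdlib Require Import Lra Lia List Psatz.
Open Scope R_scope.

Fixpoint lsum (n:nat) (u:nat->R) : R := match n with 0%nat => 0 | S n => lsum n u + u n end.
Definition sumL {A} (h:A->R) (l:list A) := fold_right Rplus 0 (map h l).
Definition upd (n:nat) (v:R) (e:nat->R) : nat -> R := fun j => if Nat.eqb j n then v else e j.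
Fixpoint signs (n:nat) : list (nat->R) := match n with
  | 0%nat => (fun _ => 0) :: nil
  | S n => map (upd n 1) (signs n) ++ map (upd n (-1)) (signs n) end.

Lemma sumL_cons {A} (h:A->R) a l : sumL h (a::l) = h a + sumL h l.
Proof. reflexivity. Qed.
Lemma sumL_app {A} (h:A->R) l1 l2 : sumL h (l1++l2) = sumL h l1 + sumL h l2.
Proof. induction l1; simpl. unfold sumL; simpl; ring. rewrite !sumL_cons, IHl1; ring. Qed.
Lemma sumL_map {A B} (h:B->R) (f:A->B) l : sumL h (map f l) = sumL (fun x => h (f x)) l.
Proof. unfold sumL; rewrite map_map; reflexivity. Qed.
Lemma sumL_plus {A} (h1 h2:A->R) l : sumL (fun x => h1 x + h2 x) l = sumL h1 l + sumL h2 l.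
Proof. induction l. unfold sumL; simpl; ring. rewrite !sumL_cons, IHl; ring. Qed.
Lemma sumL_scal {A} (h:A->R) c l : sumL (fun x => c * h x) l = c * sumL h l.
Proof. induction l. unfold sumL; simpl; ring. rewrite !sumL_cons, IHl; ring. Qed.
Lemma sumL_le {A} (h1 h2:A->R) l : (forall x, In x l -> h1 x <= h2 x) -> sumL h1 l <= sumL h2 l.
Proof. induction l; intros H. unfold sumL; simpl; lra. rewrite !sumL_cons.
  assert (h1 a <= h2 a) by (apply H; simpl; auto).
  assert (sumL h1 l <= sumL h2 l) by (apply IHl; intros; apply H; simpl; auto). lra. Qed.
Lemma sumL_ext {A} (h1 h2:A->R) l : (forall x, In x l -> h1 x = h2 x) -> sumL h1 l = sumL h2 l.
Proof. intros H; apply Rle_antisym; apply sumL_le; intros x Hx; rewrite H; auto; lra. Qed.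
Lemma sumL_zero {A} (l:list A) : sumL (fun _ => 0) l = 0.
Proof. induction l. reflexivity. rewrite sumL_cons, IHl; ring. Qed.
Lemma sumL_swap {A B} (H : A -> B -> R) l1 l2 :
  sumL (fun y => sumL (fun e => H y e) l2) l1 = sumL (fun e => sumL (fun y => H y e) l1) l2.
Proof. induction l1. unfold sumL at 1; simpl. symmetry; apply (sumL_zero l2).
  rewrite sumL_cons, IHl1, <- sumL_plus. apply sumL_ext; intros; rewrite sumL_cons; ring. Qed.

Lemma sumL_const n c : sumL (fun _ => c) (signs n) = 2^n * c.
Proof. induction n. unfold sumL; simpl; ring. simpl signs. rewrite sumL_app, !sumL_map.
  rewrite IHn. simpl; try ring. Qed.

Lemma lsum_ext n u v : (forall j, (j<n)%nat -> u j = v j) -> lsum n u = lsum n v.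
Proof. induction n; intros H; simpl; auto. rewrite IHn, H; auto; intros; apply H; lia. Qed.
Lemma lsum_tail n d u : (forall j, (n<=j)%nat -> u j = 0) -> lsum (n+d) u = lsum n u.
Proof. intros H; induction d. rewrite Nat.add_0_r; auto.
  rewrite Nat.add_succ_r; simpl. rewrite IHd, H; [ring|lia]. Qed.

Lemma key n : forall a c k, (k<n)%nat ->
  2^n * Rabs (a k) <= sumL (fun e => Rabs (c + lsum n (fun j => a j * e j))) (signs n).
Proof. induction n; intros a c k Hk. lia. simpl signs. rewrite sumL_app, !sumL_map.
  assert (H1 : forall v e, Rabs (c + lsum (S n) (fun j => a j * upd n v e j)) =
     Rabs ((c + a n * v) + lsum n (fun j => a j * e j))).
  { intros v e. simpl lsum. rewrite (lsum_ext n _ (fun j => a j * e j)).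
    unfold upd; rewrite Nat.eqb_refl. f_equal; ring.
    intros j Hj; unfold upd. replace (Nat.eqb j n) with false; auto.
    symmetry; apply Nat.eqb_neq; lia. }
  rewrite (sumL_ext _ _ _ (fun e _ => H1 1 e)), (sumL_ext _ _ _ (fun e _ => H1 (-1) e)).
  destruct (Nat.eq_dec k n).
  - subst. rewrite <- sumL_plus.
    apply Rle_trans with (sumL (fun _ => 2 * Rabs (a n)) (signs n)).
    rewrite sumL_const; simpl; lra.
    apply sumL_le; intros e _. 
    set (L := lsum n (fun j => a j * e j)).
    unfold Rabs; repeat destruct Rcase_abs; lra.
  - assert (k < n)%nat by lia.
    pose proof (IHn a (c + a n * 1) k H). pose proof (IHn a (c + a n * -1) k H).
    simpl pow. lra.
Qed.

Lemma signs_prop n e : In e (signs n) -> (forall j, (n<=j)%nat -> e j = 0) /\ (forall j, Rabs (e j) <= 1).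
Proof. revert e; induction n; intros e He; simpl in He.
  - destruct He as [<-|[]]. split; intros; rewrite ?Rabs_R0; lra.
  - apply in_app_iff in He. destruct He as [He|He]; apply in_map_iff in He;
    destruct He as [e0 [<- He0]]; destruct (IHn e0 He0) as [A B]; split; intros j; unfold upd;
    destruct (Nat.eqb_spec j n); intros; try (apply A; lia); auto;
    try (rewrite Rabs_R1; lra); try (rewrite Rabs_Ropp, Rabs_R1; lra); try lia; unfold Rabs; destruct Rcase_abs; lra.
Qed.

Lemma sum_n_lsum u k : sum_n u k = lsum (S k) u.
Proof. induction k. rewrite sum_O; simpl; symmetry; apply Rplus_0_l. rewrite sum_Sn, IHk. reflexivity. Qed.

Lemma Series_fin u n : (forall j, (n<=j)%nat -> u j = 0) -> Series u = lsum n u.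
Proof. intros H. unfold Series. rewrite (Lim_seq_ext_loc _ (fun _ => lsum n u)).
  rewrite Lim_seq_const; reflexivity. exists n; intros k Hk. rewrite sum_n_lsum.
  replace (S k) with (n + (S k - n))%nat by lia. apply lsum_tail; auto. Qed.

Lemma fold_max_ge l a : In a l -> a <= fold_right Rmax 0 l.
Proof. induction l; simpl; intros H. destruct H. destruct H as [<-|H]. apply Rmax_l.
  eapply Rle_trans; [apply IHl; auto| apply Rmax_r]. Qed.
Lemma fold_max_pos l : 0 <= fold_right Rmax 0 l.
Proof. induction l; simpl. lra. eapply Rle_trans; [apply IHl| apply Rmax_r]. Qed.

Lemma maxbelow_ge x n i : (i<n)%nat -> Rabs (x i) <= maxbelow x n.
Proof. intros H; unfold maxbelow; apply fold_max_ge. apply in_map_iff. exists i; split; auto.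
  apply in_seq; lia. Qed.

Lemma prod_bounds (h: nat -> R) l : (forall m, In m l -> 0<=h m<=1) -> 0 <= fold_right Rmult 1 (map h l) <= 1.
Proof. induction l; simpl; intros H. lra.
  assert (0 <= h a <= 1) by (apply H; auto). assert (0 <= fold_right Rmult 1 (map h l) <= 1) by (apply IHl; auto).
  split; nra. Qed.
Lemma prod_zero (h: nat -> R) l m : In m l -> h m = 0 -> fold_right Rmult 1 (map h l) = 0.
Proof. induction l; simpl; intros H Hm. destruct H. destruct H as [<-|H]. rewrite Hm; ring.
  rewrite IHl; auto; ring. Qed.

Section S.
Variables (N : nat -> nat) (g : nat -> nat -> seqR -> R) (Hg : admissible_g N g).

Lemma inf_bounds n x : in_l1 x -> 0 <= inf_prod g n x <= 1.
Proof. intros Hx.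
  assert (Hu : forall M, 0 <= partial_prod g n x M <= 1).
  { intros M; apply prod_bounds. intros m Hm. apply in_seq in Hm. apply (proj1 (Hg n m ltac:(lia))); auto. }
  assert (A : Rbar_le (Lim_seq (partial_prod g n x)) 1).
  { rewrite <- (Lim_seq_const 1). apply Lim_seq_le_loc. exists 0%nat; intros; apply Hu. }
  assert (B : Rbar_le 0 (Lim_seq (partial_prod g n x))).
  { rewrite <- (Lim_seq_const 0). apply Lim_seq_le_loc. exists 0%nat; intros; apply Hu. }
  unfold inf_prod. revert A B. destruct (Lim_seq (partial_prod g n x)); simpl; intros; try lra; tauto.
Qed.

Lemma inf_zero n x k : (n<k)%nat -> g n k x = 0 -> inf_prod g n x = 0.
Proof. intros Hk H0. unfold inf_prod. rewrite (Lim_seq_ext_loc _ (fun _ => 0)).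
  rewrite Lim_seq_const; reflexivity. exists (k - n)%nat; intros M HM.
  unfold partial_prod. apply (prod_zero _ _ k); auto. apply in_seq; lia. Qed.

Lemma f_bounds i x : in_l1 x -> 0 <= Defs.f N g i x <= Rabs (x i).
Proof. intros Hx. unfold Defs.f. pose proof (inf_bounds i x Hx).
  assert (0 <= INR (N i) * maxbelow x i) by (apply Rmult_le_pos; [apply pos_INR| apply fold_max_pos]).
  assert (0 <= Rmax (Rabs (x i) - INR (N i) * maxbelow x i) 0) by apply Rmax_r.
  assert (Rmax (Rabs (x i) - INR (N i) * maxbelow x i) 0 <= Rabs (x i)).
  { apply Rmax_lub. lra. apply Rabs_pos. }
  split; nra. Qed.

Lemma disjoint i k x : in_l1 x -> (i<k)%nat -> 0 < Defs.f N g k x -> Defs.f N g i x = 0.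
Proof. intros Hx Hik Hpos. unfold Defs.f in Hpos.
  assert (Rabs (x k) - INR (N k) * maxbelow x k > 0).
  { destruct (Rle_dec (Rabs (x k) - INR (N k) * maxbelow x k) 0) as [Hle|]; [|lra].
    rewrite Rmax_right in Hpos; lra. }
  assert (INR (N k) * Rabs (x i) <= INR (N k) * maxbelow x k).
  { apply Rmult_le_compat_l. apply pos_INR. apply maxbelow_ge; auto. }
  assert (g i k x = 0). { apply (proj1 (proj2 (proj2 (Hg i k Hik)))); auto; lra. }
  unfold Defs.f. rewrite (inf_zero i x k); auto; ring. Qed.

Lemma fold_plus_init l c : fold_right Rplus c l = fold_right Rplus 0 l + c.
Proof. induction l; simpl. ring. rewrite IHl; ring. Qed.

Lemma Fsum_lsum n x : Fsum N g n x = lsum n (fun i => Defs.f N g i x).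
Proof. unfold Fsum. induction n. reflexivity. rewrite seq_S, map_app, fold_right_app. simpl.
  rewrite fold_plus_init, IHn. ring. Qed.

Lemma Fsum_struct n x : in_l1 x ->
  (lsum n (fun i => Defs.f N g i x) = 0 /\ forall k, (k<n)%nat -> Defs.f N g k x = 0) \/
  (exists k, (k<n)%nat /\ lsum n (fun i => Defs.f N g i x) = Defs.f N g k x /\ 0 < Defs.f N g k x).
Proof. intros Hx. induction n. left; split; [reflexivity| intros; lia].
  simpl lsum. pose proof (f_bounds n x Hx).
  destruct (Req_dec (Defs.f N g n x) 0) as [E|E].
  - rewrite E, Rplus_0_r. destruct IHn as [[A B]|[k [A [B C]]]].
    left; split; auto. intros k Hk. destruct (Nat.eq_dec k n); [subst; auto| apply B; lia].
    right; exists k; split; [lia|auto].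
  - assert (P : 0 < Defs.f N g n x) by lra.
    assert (Z : forall k, (k<n)%nat -> Defs.f N g k x = 0) by (intros; apply (disjoint k n); auto).
    right; exists n; split; [lia| split; auto].
    destruct IHn as [[A B]|[k [A [B C]]]]. rewrite A; ring. rewrite Z in C; auto; lra.
Qed.

Lemma F_bound n y : in_l1 y ->
  2^n * Rabs (Fsum N g n y) <= sumL (fun e => Rabs (pair y e)) (signs n).
Proof. intros Hy.
  assert (EQ : sumL (fun e => Rabs (pair y e)) (signs n) =
               sumL (fun e => Rabs (0 + lsum n (fun j => y j * e j))) (signs n)).
  { apply sumL_ext; intros e He. unfold pair. rewrite (Series_fin _ n). f_equal; ring.
    intros j Hj. rewrite (proj1 (signs_prop n e He) j Hj); ring. }
  rewrite Fsum_lsum. destruct (Fsum_struct n y Hy) as [[A _]|[k [A [B C]]]].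
  - rewrite A, Rabs_R0, Rmult_0_r. rewrite <- (sumL_zero (signs n)). apply sumL_le; intros; apply Rabs_pos.
  - rewrite B, EQ. eapply Rle_trans; [|apply (key n y 0 k A)].
    pose proof (f_bounds k y Hy). rewrite Rabs_right by lra.
    apply Rmult_le_compat_l. apply pow_le; lra. lra.
Qed.

End S.

Theorem mainTheorem9 (N : nat -> nat) (g : nat -> nat -> seqR -> R)
  (HN : forall i j, (i < j)%nat -> (N i < N j)%nat)
  (Hg : admissible_g N g) :
  forall n : nat, Rbar_le (fbl_norm (Fsum N g n)) 1.
Proof.
  intros n. unfold fbl_norm. destruct (Lub_Rbar_correct (fun r => exists xs, fbl_admissible xs /\
     r = fold_right Rplus 0 (map (fun y => Rabs (Fsum N g n y)) xs))) as [_ Hlub].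
  apply Hlub. intros r [xs [[Hl1 Hadm] ->]]. simpl.
  change (sumL (fun y => Rabs (Fsum N g n y)) xs <= 1).
  assert (P : 0 < 2^n) by (apply pow_lt; lra).
  assert (2^n * sumL (fun y => Rabs (Fsum N g n y)) xs <= 2^n * 1).
  { rewrite <- sumL_scal.
    eapply Rle_trans. apply (sumL_le _ (fun y => sumL (fun e => Rabs (pair y e)) (signs n))).
    intros y Hy. apply F_bound; auto. rewrite Forall_forall in Hl1; auto.
    rewrite sumL_swap. rewrite <- sumL_const. apply sumL_le. intros e He.
    apply Hadm. destruct (signs_prop n e He) as [A B]. split; auto.
    unfold in_c0. apply (is_lim_seq_ext_loc (fun _ => 0)). exists n; intros; symmetry; auto.
    apply is_lim_seq_const. }
  nra.
Qed.
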